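(* For all integers $n\ge0$ and $p\ge0$, $$\mathcal{B}_{n,p}=\sum_{k\ge0}\binom{p+k}{k}^{-1}{}_1F_1(k+1;p+k+1;-1)\frac{k^n}{k!},$$ with the convention $0^0=1$.
   Context: ${}_1F_1(a;c;w)=\sum_{n\ge0}\frac{a^{\overline n}}{c^{\overline n}}\frac{w^n}{n!}$ is Kummer's confluent hypergeometric function, where $a^{\overline n}=a(a+1)\cdots(a+n-1)$. For an integer $p\ge0$, the $p$-Bell numbers $\mathcal{B}_{n,p}$ are defined by $\sum_{n\ge0}\mathcal{B}_{n,p}\frac{z^n}{n!}=\sum_{n\ge0}\binom{n+p}{p}^{-1}\frac{(e^z-1)^n}{n!}$. *)

(* Defs.v *)
From mathcomp Require Import all_boot all_order all_algebra.
From mathcomp Require Import all_classical all_reals all_analysis.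
Set Implicit Arguments. Unset Strict Implicit. Unset Printing Implicit Defensive.
Import Order.TTheory GRing.Theory Num.Theory.
Import numFieldNormedType.Exports.
Local Open Scope ring_scope.

Definition rising {R : pzRingType} (a : R) (n : nat) : R :=
  \prod_(i < n) (a + i%:R).

Definition hyp1F1 {R : realType} (a c w : R) : R :=
  let u : R^nat := fun n => rising a n / rising c n * w ^+ n / (n`!)%:R in
  limn (series u).

Definition expm1_trunc {R : realType} (n : nat) : {poly R} :=
  \sum_(1 <= j < n.+1) ((j`!)%:R)^-1 *: 'X^j.

(* p-Bell numbers: B_{n,p} = n! [z^n] sum_k C(k+p,p)^{-1} (e^z-1)^k/k!,
   computed as formal power series coefficient extraction.  Since e^z-1 has
   no constant term, only k <= n and the terms of degree <= n of e^z-1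
   contribute to [z^n], so the truncation below is exact. *)
Definition pBell {R : realType} (n p : nat) : R :=
  (n`!)%:R * (\sum_(k < n.+1)
     ((('C(k + p, p))%:R)^-1 / (k`!)%:R) *: (expm1_trunc n) ^+ k)`_n.

(* Main.v *)
Require Import Defs.
From mathcomp Require Import all_boot all_order all_algebra.
From mathcomp Require Import all_classical all_reals all_analysis.
From mathcomp Require Import ring lra.
Import Order.TTheory GRing.Theory Num.Theory.
Import numFieldNormedType.Exports.
Local Open Scope classical_set_scope.
Local Open Scope ring_scope.
Section Aux.
Variable R : realType.
Variables n p : nat.

Lemma factR_neq0 k : (k`!)%:R != 0 :> R.
Proof. by rewrite pnatr_eq0 -lt0n fact_gt0. Qed.

Lemma binR k j : (j <= k)%N ->
  ('C(k, j))%:R = (k`!)%:R / ((j`!)%:R * ((k - j)`!)%:R) :> R.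
Proof.
move=> jk; rewrite -(bin_fact jk) !natrM.
have h1 := factR_neq0 j; have h2 := factR_neq0 (k - j).
by field; rewrite h1 h2.
Qed.

Definition Ep : {poly R} := \poly_(j < n.+1) ((j`!)%:R)^-1.

Lemma E1E : expm1_trunc n = Ep - 1.
Proof.
rewrite /expm1_trunc /Ep poly_def big_ord_recl /= fact0 invr1 expr0 scale1r.
rewrite (addrC 1) addrK big_add1 /= big_mkord; apply: eq_bigr => i _.
by rewrite /bump /= add1n.
Qed.

Lemma E1X : exists q : {poly R}, expm1_trunc n = 'X * q.
Proof.
exists (\sum_(j < n) (((j.+1)`!)%:R)^-1 *: 'X^j).
rewrite /expm1_trunc big_add1 /= big_mkord big_distrr /=; apply: eq_bigr => i _.
by rewrite exprS scalerAr.
Qed.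

Lemma coefEX i a : (a <= n)%N -> (Ep ^+ i)`_a = (i%:R ^+ a) / (a`!)%:R.
Proof.
elim: i a => [|i IH] a an.
  rewrite expr0 coef1; case: a an => [|a] _; first by rewrite expr0 fact0 divr1.
  by rewrite expr0n /= mul0r.
rewrite exprSr coefM -natr1 exprD1n mulr_suml; apply: eq_bigr => -[j /= ja] _.
have jn : (j <= n)%N by apply: leq_trans an; rewrite -ltnS.
rewrite IH // /Ep coef_poly ltnS (leq_trans (leq_subr _ _) an).
rewrite -[_ *+ 'C(a, j)]mulr_natr binR // .
have h1 := factR_neq0 j; have h2 := factR_neq0 (a - j); have h3 := factR_neq0 a.
by field; rewrite h1 h2 h3.
Qed.

Lemma E1pow s : ((expm1_trunc (R:=R) n) ^+ s)`_n =
  (\sum_(i < s.+1) (-1)^+(s - i) * ('C(s, i))%:R * (i%:R ^+ n)) / (n`!)%:R.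
Proof.
rewrite E1E addrC exprDn coef_sum mulr_suml; apply: eq_bigr => -[i /= ii] _.
have -> : (-1 : {poly R}) ^+ (s - i) = ((-1) ^+ (s - i))%:P.
  by rewrite rmorphXn /= rmorphN1.
rewrite coefMn mulrC coefMC coefEX //.
by rewrite -mulr_natr; field; rewrite factR_neq0.
Qed.

Lemma E1vanish s : (n < s)%N -> ((expm1_trunc (R:=R) n) ^+ s)`_n = 0.
Proof.
move=> ns; have [q ->] := E1X.
by rewrite exprMn coefXnM ns.
Qed.

Definition aa (i : nat) : R := (i%:R ^+ n) / (i`!)%:R.
Definition bb (m : nat) : R := (-1) ^+ m / (m`!)%:R.
Definition dd (j : nat) : R := (('C(j + p, p))%:R)^-1.
Definition sig (s : nat) : R := \sum_(0 <= i < s.+1) aa i * bb (s - i).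

Lemma sigE s : sig s = (n`!)%:R / (s`!)%:R * ((expm1_trunc (R:=R) n) ^+ s)`_n.
Proof.
rewrite E1pow /sig big_mkord mulrA mulr_sumr mulr_suml; apply: eq_bigr => -[i /= ii] _.
rewrite /aa /bb binR //.
have h1 := factR_neq0 i; have h2 := factR_neq0 (s - i); have h3 := factR_neq0 s.
have h4 := factR_neq0 n.
by field; rewrite h1 h2 h3 h4.
Qed.

Lemma sig0 s : (n < s)%N -> sig s = 0.
Proof. by move=> ns; rewrite sigE E1vanish // mulr0. Qed.

Lemma pBellE : pBell n p = \sum_(0 <= k < n.+1) dd k * sig k.
Proof.
rewrite /pBell coef_sum mulr_sumr big_mkord; apply: eq_bigr => k _.
rewrite coefZ sigE /dd.
have h3 := factR_neq0 k; have h4 := factR_neq0 n.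
field.
by rewrite h3 pnatr_eq0 -lt0n bin_gt0 leq_addl.
Qed.

Definition SS (i M : nat) : R := \sum_(0 <= m < M) bb m * dd (i + m).
Definition QQ (K : nat) : R := \sum_(0 <= i < K) aa i * SS i (K - i).

Lemma Qtri K : QQ K = \sum_(0 <= s < K) dd s * sig s.
Proof.
elim: K => [|K IH]; first by rewrite /QQ !big_geq.
rewrite big_nat_recr //= -IH /QQ big_nat_recr //=.
rewrite subSnn /sig big_nat_recr //= subnn /SS big_nat1 addn0.
have -> : \sum_(0 <= i < K) aa i * (\sum_(0 <= m < K.+1 - i) bb m * dd (i + m))
   = \sum_(0 <= i < K) aa i * (\sum_(0 <= m < K - i) bb m * dd (i + m))
     + \sum_(0 <= i < K) aa i * bb (K - i) * dd K.
  rewrite -big_split /=; apply: eq_big_nat => i /andP[_ iK].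
  rewrite subSn ?(ltnW iK) // big_nat_recr //= subnKC ?(ltnW iK) //.
  by rewrite mulrDr mulrA.
rewrite -addrA; congr (_ + _).
by rewrite mulrDr mulr_sumr mulrA; congr (_ + _); [apply: eq_bigr => i _; ring | ring].
Qed.

Lemma QQ_big K : (n < K)%N -> QQ K = pBell n p.
Proof.
move=> nK; rewrite Qtri pBellE (big_cat_nat _ (n := n.+1)) //= ?(ltnW nK) //.
rewrite [X in _ + X]big1_seq ?addr0 //= => s; rewrite mem_index_iota => /andP[ns _].
by rewrite sig0 ?mulr0.
Qed.

Definition uu (i : nat) : R^nat := fun m => bb m * dd (i + m).

Lemma dd_gt0 j : 0 < dd j.
Proof. by rewrite /dd invr_gt0 ltr0n bin_gt0 leq_addl. Qed.

Lemma dd_le1 j : dd j <= 1.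
Proof. by rewrite /dd invf_le1 ?ltr0n ?bin_gt0 ?leq_addl // ler1n bin_gt0 leq_addl. Qed.

Lemma norm_uu i m : `|uu i m| <= (m`!%:R)^-1.
Proof.
rewrite /uu /bb normrM normrM normrX normrN1 expr1n mul1r normfV normr_nat.
rewrite gtr0_norm ?dd_gt0 // -[X in _ <= X]mulr1 ler_wpM2l ?dd_le1 //.
Qed.

Lemma tailsum M N : (0 < M)%N -> (M <= N)%N ->
  \sum_(M <= m < N) (m`!%:R)^-1 + 2 / (N`!%:R) <= 2 / (M`!%:R) :> R.
Proof.
move=> M0; elim: N => [|N IH]; first by rewrite leqn0 => /eqP M0'; rewrite M0' in M0.
rewrite leq_eqVlt => /orP[/eqP <-|]; first by rewrite big_geq // add0r.
rewrite ltnS => MN; rewrite big_nat_recr //= -addrA.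
apply: le_trans (IH MN); rewrite lerD2l.
have N1 : (1 <= N)%N by apply: leq_trans MN.
rewrite factS natrM invfM mulrA -[X in _ <= X]mul1r.
have hy : 2 / (N.+1)%:R <= 1 :> R.
  by rewrite ler_pdivrMr ?ltr0n // mul1r ler_nat ltnS.
have h0 : 0 <= (N`!%:R : R)^-1 by rewrite invr_ge0 ler0n.
move: hy h0; move: (2 / (N.+1)%:R : R) (N`!%:R^-1 : R) => z x.
by nra.
Qed.
Lemma Sdiff i M N : (0 < M)%N -> (M <= N)%N -> `|SS i N - SS i M| <= 2 / (M`!%:R).
Proof.
move=> M0 MN; rewrite /SS (big_cat_nat _ (n := M)) //= addrAC subrr add0r.
apply: le_trans (ler_norm_sum _ _ _) _.
have h := @tailsum M N M0 MN.
have h2 : \sum_(M <= m < N) `|bb m * dd (i + m)| <= \sum_(M <= m < N) (m`!%:R)^-1 :> R.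
  by apply: ler_sum => m _; exact: norm_uu.
have h3 : 0 <= 2 / (N`!%:R : R) by rewrite divr_ge0 ?ler0n.
lra.
Qed.

Lemma cvgS i : cvgn (series (uu i)).
Proof.
apply: normed_cvg.
apply: (@series_le_cvg _ _ (exp_coeff 1)) => [m|m|m|].
- by rewrite /= normr_ge0.
- by apply: exp_coeff_ge0.
- by rewrite /exp_coeff /= expr1n mul1r; exact: norm_uu.
- exact: is_cvg_series_exp_coeff.
Qed.

Definition FF (i : nat) : R := limn (series (uu i)).

Lemma Ftail i M : (0 < M)%N -> `|FF i - SS i M| <= 2 / (M`!%:R).
Proof.
move=> M0.
have cv : series (uu i) @ \oo --> FF i by apply: cvgS.
have cv2 : (fun N => `|series (uu i) N - SS i M|) @ \oo --> `|FF i - SS i M|.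
  by apply: cvg_norm; apply: cvgB => //; exact: cvg_cst.
apply: (cvgr_to_le cv2); near=> N.
have -> : series (uu i) N = SS i N by [].
apply: Sdiff => //; near: N.
by exists M.
Unshelve. all: by end_near.
Qed.
Definition PP (K : nat) : R := \sum_(0 <= i < K) aa i * FF i.

Lemma leq_pow i K : (i <= K)%N -> (i ^ n <= K ^ n)%N.
Proof. by move=> iK; elim: n => [|m IH] //; rewrite !expnS leq_mul. Qed.

Lemma sum_bin K : \sum_(0 <= i < K) ('C(K, i))%:R <= 2 ^+ K :> R.
Proof.
have -> : (2 : R) ^+ K = \sum_(0 <= i < K.+1) ('C(K, i))%:R.
  have -> : (2 : R) = 1 + 1 by ring.
  rewrite exprD1n big_mkord; apply: eq_bigr => j _; by rewrite expr1n.
rewrite big_nat_recr //= lerDl ler0n //.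
Qed.

Lemma binR_le2 m k : ('C(m, k))%:R <= 2 ^+ m :> R.
Proof.
have [km|mk] := leqP k m; last by rewrite bin_small // exprn_ge0.
have -> : (2 : R) ^+ m = \sum_(i < m.+1) ('C(m, i))%:R.
  have -> : (2 : R) = 1 + 1 by ring.
  rewrite exprD1n; apply: eq_bigr => j _; by rewrite expr1n.
rewrite (bigD1 (Ordinal (km : (k < m.+1)%N))) //= lerDl sumr_ge0 // => j _.
Qed.

Lemma Kbound K : K%:R ^+ n * 2 ^+ K <= (n`!)%:R * 2 ^+ n * 4 ^+ K :> R.
Proof.
have h1 : (K ^ n <= (K + n) ^_ n)%N.
  elim: n => [|m IH] //; rewrite addnS ffactSS expnS leq_mul //.
  exact: leq_trans (leq_addr m K) (leqnSn _).
have h2 : K%:R ^+ n <= ('C(K + n, n))%:R * (n`!)%:R :> R.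
  by rewrite -natrM bin_ffact -natrX ler_nat.
have h3 := binR_le2 (K + n) n.
have -> : (4 : R) ^+ K = 2 ^+ K * 2 ^+ K by rewrite -exprMn; congr (_ ^+ _); ring.
rewrite exprD in h3.
have h4 : 0 <= (n`!)%:R :> R by [].
have h5 : 0 <= (2 : R) ^+ K by rewrite exprn_ge0.
have h6 : 0 <= ('C(K + n, n))%:R :> R by [].
move: h2 h3 h4 h5 h6; move: (K%:R ^+ n : R) (2 ^+ K : R) (2 ^+ n : R) ('C(K + n, n)%:R : R) (n`!%:R : R) => a b c d e h2 h3 h4 h5 h6.
have h7 : 0 <= e * b by rewrite mulr_ge0.
nra.
Qed.
Lemma aa_ge0 i : 0 <= aa i.
Proof. by rewrite /aa divr_ge0 // exprn_ge0. Qed.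

Lemma PQ K : `|PP K - QQ K| <= 2 * ((n`!)%:R * 2 ^+ n) * (4 ^+ K / (K`!)%:R).
Proof.
have e1 : PP K - QQ K = \sum_(0 <= i < K) aa i * (FF i - SS i (K - i)).
  by rewrite /PP /QQ -sumrB; apply: eq_bigr => i _; rewrite mulrBr.
rewrite e1.
have h1 : `|\sum_(0 <= i < K) aa i * (FF i - SS i (K - i))| <=
    \sum_(0 <= i < K) (2 * K%:R ^+ n / (K`!)%:R) * ('C(K, i))%:R.
  apply: le_trans (ler_norm_sum _ _ _) _.
  rewrite big_nat_cond [X in _ <= X]big_nat_cond; apply: ler_sum => i /andP[/andP[_ iK] _].
  rewrite normrM (ger0_norm (aa_ge0 i)).
  have iK' : (0 < K - i)%N by rewrite subn_gt0.
  apply: le_trans (ler_wpM2l (aa_ge0 i) (Ftail i (K - i) iK')) _.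
  rewrite /aa binR ?(ltnW iK) //.
  have f1 := factR_neq0 i; have f2 := factR_neq0 (K - i); have f3 := factR_neq0 K.
  have -> : i%:R ^+ n / i`!%:R * (2 / (K - i)`!%:R) = i%:R ^+ n * (2 / (i`!%:R * (K - i)`!%:R)) :> R.
    by field; rewrite f1 f2.
  have -> : 2 * K%:R ^+ n / K`!%:R * (K`!%:R / (i`!%:R * (K - i)`!%:R)) = K%:R ^+ n * (2 / (i`!%:R * (K - i)`!%:R)) :> R.
    by field; rewrite f1 f2 f3.
  apply: ler_wpM2r; first by rewrite divr_ge0 // mulr_ge0.
  by rewrite -!natrX ler_nat leq_pow // ltnW.
apply: le_trans h1 _.
rewrite -mulr_sumr.
have h2 := sum_bin K.
have h3 := Kbound K.
have h4 : 0 <= 2 * K%:R ^+ n / (K`!)%:R :> R by rewrite !mulr_ge0 ?exprn_ge0 ?invr_ge0.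
apply: le_trans (ler_wpM2l h4 h2) _.
have -> : 2 * K%:R ^+ n / K`!%:R * 2 ^+ K = (K%:R ^+ n * 2 ^+ K) * (2 / K`!%:R) :> R by ring.
have -> : 2 * (n`!%:R * 2 ^+ n) * (4 ^+ K / K`!%:R) = (n`!%:R * 2 ^+ n * 4 ^+ K) * (2 / K`!%:R) :> R by ring.
by apply: ler_wpM2r => //; rewrite divr_ge0.
Qed.
Lemma risingE j m : rising ((j.+1)%:R : R) m = ((j + m)`!)%:R / (j`!)%:R.
Proof.
elim: m => [|m IH]; first by rewrite /rising big_ord0 addn0 divff // factR_neq0.
rewrite /rising big_ord_recr /= -/(rising _ _) IH addnS factS natrM.
have f1 := factR_neq0 j.
rewrite -natrD addSn.
by field.
Qed.

Lemma hypE k : hyp1F1 ((k.+1)%:R : R) ((p + k).+1%:R) (-1) = ('C(p + k, k))%:R * FF k.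
Proof.
rewrite /hyp1F1 /=.
have e : (fun m => rising ((k.+1)%:R : R) m / rising ((p + k).+1%:R) m * (-1) ^+ m / (m`!)%:R)
   = (fun m => ('C(p + k, k))%:R * uu k m).
  apply: funext => m; rewrite !risingE /uu /bb /dd.
  rewrite !binR ?leq_addl ?leq_addr //.
  rewrite addnK -addnA addnK (addnC p k) (addnC (k + m) p) addnA.
  have f1 := factR_neq0 k; have f2 := factR_neq0 p; have f3 := factR_neq0 (k + m).
  have f4 := factR_neq0 (p + k); have f5 := factR_neq0 (p + k + m); have f6 := factR_neq0 m.
  have f7 := factR_neq0 (k + p).
  by field; rewrite ?f1 ?f2 ?f3 ?f4 ?f5 ?f6 ?f7.
rewrite e.
have -> : series (fun m => ('C(p + k, k))%:R * uu k m) = (fun N => ('C(p + k, k))%:R * series (uu k) N).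
  by apply: funext => N; rewrite /series /= mulr_sumr.
apply: cvg_lim => //; apply: cvgMr; exact: cvgS.
Qed.
Lemma main_aux :
  series (fun k : nat =>
    ((('C(p + k, k))%:R)^-1 * hyp1F1 (k.+1%:R) ((p + k).+1%:R) (-1)
      * ((k%:R : R) ^+ n) / (k`!)%:R)) @ \oo --> (pBell n p : R).
Proof.
have -> : (fun k : nat =>
    ((('C(p + k, k))%:R)^-1 * hyp1F1 (k.+1%:R) ((p + k).+1%:R) (-1)
      * ((k%:R : R) ^+ n) / (k`!)%:R)) = (fun k => aa k * FF k).
  apply: funext => k; rewrite hypE /aa.
  have f1 := factR_neq0 k.
  have f2 : ('C(p + k, k))%:R != 0 :> R by rewrite pnatr_eq0 -lt0n bin_gt0 leq_addl.
  by field; rewrite f1 f2.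
have w0 : exp_coeff (4 : R) @ \oo --> 0.
  exact: cvg_series_cvg_0 (is_cvg_series_exp_coeff 4).
set C0 : R := 2 * ((n`!)%:R * 2 ^+ n).
have C0pos : 0 < C0 by rewrite /C0 !mulr_gt0 ?exprn_gt0 // ltr0n fact_gt0.
apply/cvgrPdist_le => e e0.
move/cvgrPdist_le : w0 => /(_ (e / C0)) h.
have := h (divr_gt0 e0 C0pos).
move=> {}h; near=> K.
have nK : (n < K)%N by near: K; exists n.+1.
rewrite -(@QQ_big K nK) distrC.
have -> : series (fun k => aa k * FF k) K = PP K by [].
apply: le_trans (PQ K) _.
have hK : `|0 - exp_coeff 4 K| <= e / C0 by near: K.
rewrite sub0r normrN /exp_coeff /= ger0_norm ?divr_ge0 ?exprn_ge0 // in hK.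
rewrite -/C0 mulrC -ler_pdivlMr //.
Unshelve. all: by end_near.
Qed.
End Aux.

Theorem mainTheorem20 (R : realType) (n p : nat) :
  series (fun k : nat =>
    ((('C(p + k, k))%:R)^-1 * hyp1F1 (k.+1%:R) ((p + k).+1%:R) (-1)
      * ((k%:R : R) ^+ n) / (k`!)%:R)) @ \oo --> (pBell n p : R).
Proof. exact: main_aux. Qed.
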